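(* Let $p$ be a prime and $b$ an integer with $0<b<\frac{p-1}{2}$ and $(p-b)(p-b^{-1})=2p+1$. Then $|\mathrm{inv}_{1,b}|=5$, so $R=\mathbb{C}[y_0,\dots,y_4]$, and $$\ker\varphi_{1,b}=\langle y_2^2-y_1y_3,\ y_1y_2-y_0y_3,\ y_3^{b+1}-y_2y_4,\ y_1^2-y_0y_2,\ y_2y_3^b-y_1y_4,\ y_1y_3^b-y_0y_4\rangle.$$
   Context: Let $S=\mathbb{C}[x_1,x_2]$ (standard grading), $\zeta=e^{2\pi i/p}$, $G=\mathbb{Z}/p\mathbb{Z}=\langle\zeta\rangle$ acting on $S$ by $x_1\mapsto\zeta x_1$, $x_2\mapsto\zeta^bx_2$, with invariant ring $S^G_{1,b}$ (spanned by monomials $x_1^cx_2^d$ with $c+bd\equiv0\pmod p$). $\mathrm{inv}_{1,b}$ denotes the minimal set of monomial generators of $S^G_{1,b}$ as a $\mathbb{C}$-algebra: the nonconstant invariant monomials that are not a product of two nonconstant invariant monomials. Writing $\mathrm{inv}_{1,b}=\{z_0,\dots,z_n\}$ in lexicographic order with $x_1>x_2$ (decreasing exponent of $x_1$), $R=\mathbb{C}[y_0,\dots,y_n]$ with $\deg y_i=\deg z_i$, and $\varphi_{1,b}:R\to S^G_{1,b}$ is the $\mathbb{C}$-algebra map $y_i\mapsto z_i$. $b^{-1}$ is the unique integer $0<b^{-1}<p$ with $bb^{-1}\equiv1\pmod p$. *)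

(* Defs.v *)
(* The complex numbers are modelled as  complex R = R[i]  for an arbitrary
   R : realType (every realType is a model of the real numbers). *)
From mathcomp Require Import all_boot all_algebra.
From mathcomp Require Import reals.
From mathcomp Require Import complex.
From mathcomp Require Import mpoly.

Set Implicit Arguments.
Unset Strict Implicit.
Unset Printing Implicit Defensive.

Import GRing.Theory.
Local Open Scope ring_scope.

(* A monomial x1^c x2^d is encoded by its exponent pair (c, d). *)

Definition invariant_exp (p b : nat) (e : nat * nat) : bool :=
  ((e.1 + b * e.2) %% p == 0)%N.

Definition nc_invariant_exp (p b : nat) (e : nat * nat) : bool :=
  (e != (0%N, 0%N)) && invariant_exp p b e.

Definition in_inv (p b : nat) (e : nat * nat) : Prop :=
  nc_invariant_exp p b e /\
  ~ (exists e1 e2 : nat * nat,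
        [/\ nc_invariant_exp p b e1, nc_invariant_exp p b e2
          & e = (e1.1 + e2.1, e1.2 + e2.2)%N]).

Definition lex_gt (e f : nat * nat) : bool :=
  (f.1 < e.1)%N || ((e.1 == f.1) && (f.2 < e.2)%N).

Definition inv_list (p b : nat) (zs : seq (nat * nat)) : Prop :=
  sorted lex_gt zs /\ (forall e, e \in zs <-> in_inv p b e).

Definition monom (C : nzRingType) (e : nat * nat) : {mpoly C[2]} :=
  'X_(@inord 1 0) ^+ e.1 * 'X_(@inord 1 1) ^+ e.2.

Definition varphi (C : nzRingType) (n : nat) (zs : seq (nat * nat))
  (f : {mpoly C[n]}) : {mpoly C[2]} :=
  mmap (fun c : C => c%:MP) (fun i : 'I_n => monom C (nth (0%N, 0%N) zs i)) f.

Definition in_ideal (C : nzRingType) (n : nat) (gs : seq {mpoly C[n]})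
  (f : {mpoly C[n]}) : Prop :=
  exists cs : 'I_(size gs) -> {mpoly C[n]},
    f = \sum_(i < size gs) cs i * gs`_i.

Definition y (C : nzRingType) (i : nat) : {mpoly C[5]} := 'X_(@inord 4 i).

Definition kernel_gens (C : nzRingType) (b : nat) : seq {mpoly C[5]} :=
  [:: y C 2 ^+ 2 - y C 1 * y C 3;
      y C 1 * y C 2 - y C 0 * y C 3;
      y C 3 ^+ b.+1 - y C 2 * y C 4;
      y C 1 ^+ 2 - y C 0 * y C 2;
      y C 2 * y C 3 ^+ b - y C 1 * y C 4;
      y C 1 * y C 3 ^+ b - y C 0 * y C 4].

(* Main.v *)
Require Import Defs.
From mathcomp Require Import all_boot all_algebra.
From mathcomp Require Import reals complex mpoly.
From mathcomp Require Import ring lra zify.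
Set Implicit Arguments. Unset Strict Implicit. Unset Printing Implicit Defensive.
Import GRing.Theory.
Local Open Scope ring_scope.
Section B.
Variable C : comNzRingType.
Variable b : nat.
Hypothesis b_gt0 : (0 < b)%N.

Local Notation I := (in_ideal (kernel_gens C b)).

Lemma size_gens : size (kernel_gens C b) = 6%N. Proof. by []. Qed.

Lemma I0 : I 0.
Proof. by exists (fun _ => 0); rewrite big1 // => i _; rewrite mul0r. Qed.

Lemma ID f g : I f -> I g -> I (f + g).
Proof.
move=> [c1 ->] [c2 ->]; exists (fun i => c1 i + c2 i).
by rewrite -big_split /=; apply: eq_bigr => i _; rewrite mulrDl.
Qed.

Lemma IM q f : I f -> I (q * f).
Proof.
move=> [c1 ->]; exists (fun i => q * c1 i).
by rewrite mulr_sumr; apply: eq_bigr => i _; rewrite mulrA.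
Qed.

Lemma IN f : I f -> I (- f).
Proof. by move=> H; rewrite -mulN1r; apply: IM. Qed.

Lemma IB f g : I f -> I g -> I (f - g).
Proof. by move=> Hf Hg; apply: ID => //; apply: IN. Qed.

Lemma IZ c f : I f -> I (c *: f).
Proof. by move=> H; rewrite -mul_mpolyC; apply: IM. Qed.

Lemma Igen (j : 'I_6) : I (kernel_gens C b)`_j.
Proof.
exists (fun i => (i == j)%:R).
rewrite (bigD1 j) //= eqxx mul1r big1 ?addr0 // => i /negbTE ->.
by rewrite mul0r.
Qed.

Lemma IgenM q (j : 'I_6) : I (q * (kernel_gens C b)`_j).
Proof. by apply: IM; apply: Igen. Qed.

Definition Y (a0 a1 a2 a3 a4 : nat) : {mpoly C[5]} :=
  y C 0 ^+ a0 * y C 1 ^+ a1 * y C 2 ^+ a2 * y C 3 ^+ a3 * y C 4 ^+ a4.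

Definition normal (c1 c2 c3 : nat) : Prop :=
  [/\ (c1 + c2 <= 1)%N, (c3 <= b)%N & ((c1 + c2 = 1)%N -> (c3 < b)%N)].

Definition img (a0 a1 a2 a3 a4 : nat) : nat * nat :=
  ((3*b+1)*a0 + (2*b+1)*a1 + (b+1)*a2 + a3, a1 + 2*a2 + 3*a3 + (3*b+1)*a4)%N.

Definition Pn (a0 a1 a2 a3 a4 : nat) : Prop :=
  exists c0 c1 c2 c3 c4, [/\ normal c1 c2 c3, img a0 a1 a2 a3 a4 = img c0 c1 c2 c3 c4
    & I (Y a0 a1 a2 a3 a4 - Y c0 c1 c2 c3 c4)].

Lemma step a0 a1 a2 a3 a4 a0' a1' a2' a3' a4' (j : 'I_6) r0 r1 r2 r3 r4 :
  Y a0 a1 a2 a3 a4 - Y a0' a1' a2' a3' a4' = Y r0 r1 r2 r3 r4 * (kernel_gens C b)`_j ->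
  img a0 a1 a2 a3 a4 = img a0' a1' a2' a3' a4' ->
  Pn a0' a1' a2' a3' a4' -> Pn a0 a1 a2 a3 a4.
Proof.
move=> E Ei [c0 [c1 [c2 [c3 [c4 [Hn Hi HI]]]]]].
exists c0, c1, c2, c3, c4; split => //; first by rewrite Ei.
have -> : Y a0 a1 a2 a3 a4 - Y c0 c1 c2 c3 c4 =
   (Y a0 a1 a2 a3 a4 - Y a0' a1' a2' a3' a4') + (Y a0' a1' a2' a3' a4' - Y c0 c1 c2 c3 c4).
  by rewrite addrA subrK.
by apply: ID => //; rewrite E; apply: IgenM.
Qed.

Lemma reduce_lt n : forall a0 a1 a2 a3 a4, (2*a1 + 3*a2 + 3*a3 < n)%N -> Pn a0 a1 a2 a3 a4.
Proof.
elim: n => [|n IH] a0 a1 a2 a3 a4 Hn; first by [].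
case: (leqP 2 a1) => h1.
  have [k Ek] : exists k, a1 = (k + 2)%N by exists (a1 - 2)%N; lia.
  subst; apply: (@step _ _ _ _ _ (a0+1) k (a2+1) a3 a4 (@Ordinal 6 3 isT) a0 k a2 a3 a4).
  - by rewrite /Y /= !exprD !expr1; ring.
  - by rewrite /img; congr (_, _); lia.
  - by apply: IH; lia.
case: (leqP 1 a1) => h1'; case: (leqP 1 a2) => h2.
- have [k Ek] : exists k, a1 = (k + 1)%N by exists (a1 - 1)%N; lia.
  have [l El] : exists l, a2 = (l + 1)%N by exists (a2 - 1)%N; lia.
  subst; apply: (@step _ _ _ _ _ (a0+1) k l (a3+1) a4 (@Ordinal 6 1 isT) a0 k l a3 a4).
  + by rewrite /Y /= !exprD !expr1; ring.
  + by rewrite /img; congr (_, _); lia.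
  + by apply: IH; lia.
- case: (leqP b a3) => h3.
  + have [k Ek] : exists k, a1 = (k + 1)%N by exists (a1 - 1)%N; lia.
    have [l El] : exists l, a3 = (l + b)%N by exists (a3 - b)%N; lia.
    subst; apply: (@step _ _ _ _ _ (a0+1) k a2 l (a4+1) (@Ordinal 6 5 isT) a0 k a2 l a4).
    * by rewrite /Y /= !exprD !expr1; ring.
    * by rewrite /img; congr (_, _); lia.
    * by apply: IH; lia.
  + exists a0, a1, a2, a3, a4; split => //; last by rewrite subrr; apply: I0.
    by split; lia.
- case: (leqP 2 a2) => h2'.
  + have [k Ek] : exists k, a2 = (k + 2)%N by exists (a2 - 2)%N; lia.
    subst; apply: (@step _ _ _ _ _ a0 (a1+1) k (a3+1) a4 (@Ordinal 6 0 isT) a0 a1 k a3 a4).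
    * by rewrite /Y /= !exprD !expr1; ring.
    * by rewrite /img; congr (_, _); lia.
    * by apply: IH; lia.
  case: (leqP b a3) => h3.
  + have [k Ek] : exists k, a2 = (k + 1)%N by exists (a2 - 1)%N; lia.
    have [l El] : exists l, a3 = (l + b)%N by exists (a3 - b)%N; lia.
    subst; apply: (@step _ _ _ _ _ a0 (a1+1) k l (a4+1) (@Ordinal 6 4 isT) a0 a1 k l a4).
    * by rewrite /Y /= !exprD !expr1; ring.
    * by rewrite /img; congr (_, _); lia.
    * by apply: IH; lia.
  + exists a0, a1, a2, a3, a4; split => //; last by rewrite subrr; apply: I0.
    by split; lia.
- case: (leqP (b+1) a3) => h3.
  + have [l El] : exists l, a3 = (l + (b+1))%N by exists (a3 - (b+1))%N; lia.
    subst; apply: (@step _ _ _ _ _ a0 a1 (a2+1) l (a4+1) (@Ordinal 6 2 isT) a0 a1 a2 l a4).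
    * by rewrite /Y /= !exprD !expr1 exprS; ring.
    * by rewrite /img; congr (_, _); lia.
    * by apply: IH; lia.
  + exists a0, a1, a2, a3, a4; split => //; last by rewrite subrr; apply: I0.
    by split; lia.
Qed.

Lemma reduce a0 a1 a2 a3 a4 : Pn a0 a1 a2 a3 a4.
Proof. by apply: (@reduce_lt (2*a1 + 3*a2 + 3*a3).+1). Qed.

Definition sw (e : nat * nat) := (e.2 %% (3*b+1))%N.
Definition s4 (e : nat * nat) := (e.2 %/ (3*b+1))%N.
Definition s3 (e : nat * nat) := (sw e %/ 3)%N.
Definition s1 (e : nat * nat) : nat := (sw e %% 3 == 1)%N.
Definition s2 (e : nat * nat) : nat := (sw e %% 3 == 2)%N.
Definition s0 (e : nat * nat) :=
  ((e.1 - (s1 e * (2*b+1) + s2 e * (b+1) + s3 e)) %/ (3*b+1))%N.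

Lemma std_normal c0 c1 c2 c3 c4 : normal c1 c2 c3 ->
  let e := img c0 c1 c2 c3 c4 in
  [/\ s0 e = c0, s1 e = c1, s2 e = c2, s3 e = c3 & s4 e = c4].
Proof.
move=> [H1 H2 H3] e.
have Hw : sw e = (c1 + 2*c2 + 3*c3)%N /\ s4 e = c4.
  rewrite /sw /s4 /e /img /=.
  have -> : (c1 + 2 * c2 + 3 * c3 + (3 * b + 1) * c4 = c4 * (3*b+1) + (c1 + 2 * c2 + 3 * c3))%N by lia.
  have Hlt : (c1 + 2 * c2 + 3 * c3 < 3*b+1)%N by lia.
  rewrite modnMDl divnMDl; last by lia.
  by rewrite modn_small // divn_small // addn0.
case: Hw => Hw ->.
have E3 : s3 e = c3 /\ (sw e %% 3 = c1 + 2 * c2)%N.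
  rewrite /s3 Hw.
  have -> : (c1 + 2 * c2 + 3 * c3 = c3 * 3 + (c1 + 2*c2))%N by lia.
  have Hlt : (c1 + 2 * c2 < 3)%N by lia.
  by rewrite modnMDl divnMDl // modn_small // divn_small // addn0.
case: E3 => E3 Em.
have [E1 E2] : s1 e = c1 /\ s2 e = c2.
  rewrite /s1 /s2 Em.
  clear -H1 H3; by move: H1 H3; case: c1 => [|[|c1]]; case: c2 => [|[|c2]] //=; lia.
split => //.
rewrite /s0 E1 E2 E3 /e /img /=.
have -> : ((3 * b + 1) * c0 + (2 * b + 1) * c1 + (b + 1) * c2 + c3 -
     (c1 * (2 * b + 1) + c2 * (b + 1) + c3) = c0 * (3*b+1))%N by lia.
by rewrite mulnK //; lia.
Qed.

Definition zl : seq (nat * nat) :=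
  [:: (3*b+1, 0); (2*b+1, 1); (b+1, 2); (1, 3); (0, 3*b+1)]%N.

Definition hh (i : 'I_5) : {mpoly C[2]} := monom C (nth (0%N, 0%N) zl i).

Lemma varphiE f : varphi zl f = mmap (@mpolyC 2 C) hh f.
Proof. by []. Qed.

Lemma prod5 (T : comNzRingType) (F : 'I_5 -> T) :
  \prod_(i < 5) F i = F (inord 0) * F (inord 1) * F (inord 2) * F (inord 3) * F (inord 4).
Proof.
rewrite !big_ord_recl big_ord0 mulr1 !mulrA.
by congr (_ * _ * _ * _ * _); congr F; apply/val_inj; rewrite /= inordK.
Qed.

Lemma monomX e k : monom C e ^+ k = monom C (e.1 * k, e.2 * k)%N.
Proof. by rewrite /monom exprMn -!exprM. Qed.

Lemma monomM e f : monom C e * monom C f = monom C (e.1 + f.1, e.2 + f.2)%N.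
Proof. by rewrite /monom !exprD mulrACA. Qed.

Lemma phiM (p q : {mpoly C[5]}) : varphi zl (p * q) = varphi zl p * varphi zl q.
Proof. by rewrite !varphiE rmorphM. Qed.
Lemma phiXn (p : {mpoly C[5]}) k : varphi zl (p ^+ k) = varphi zl p ^+ k.
Proof. by rewrite !varphiE rmorphXn. Qed.
Lemma phiB (p q : {mpoly C[5]}) : varphi zl (p - q) = varphi zl p - varphi zl q.
Proof. by rewrite !varphiE rmorphB. Qed.
Lemma phiy k : (k < 5)%N -> varphi zl (y C k) = monom C (nth (0%N, 0%N) zl k).
Proof. by move=> Hk; rewrite varphiE /y [LHS]mmapX mmap1U /hh inordK. Qed.

Lemma phiY a0 a1 a2 a3 a4 : varphi zl (Y a0 a1 a2 a3 a4) = monom C (img a0 a1 a2 a3 a4).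
Proof.
rewrite /Y !phiM !phiXn !phiy //=.
rewrite !monomX !monomM /img /=; congr (monom C (_, _)); lia.
Qed.

Lemma phi_gen (j : 'I_6) : varphi zl (kernel_gens C b)`_j = 0.
Proof.
have H : forall a0 a1 a2 a3 a4 c0 c1 c2 c3 c4,
  img a0 a1 a2 a3 a4 = img c0 c1 c2 c3 c4 ->
  varphi zl (Y a0 a1 a2 a3 a4 - Y c0 c1 c2 c3 c4) = 0.
  by move=> ? ? ? ? ? ? ? ? ? ? E; rewrite phiB !phiY E subrr.
case: j => [[|[|[|[|[|[|j]]]]]] Hj] //=.
- have -> : y C 2 ^+ 2 - y C 1 * y C 3 = Y 0 0 2 0 0 - Y 0 1 0 1 0.
    by rewrite /Y; ring.
  by apply: H; rewrite /img; congr (_, _); lia.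
- have -> : y C 1 * y C 2 - y C 0 * y C 3 = Y 0 1 1 0 0 - Y 1 0 0 1 0.
    by rewrite /Y; ring.
  by apply: H; rewrite /img; congr (_, _); lia.
- have -> : y C 3 ^+ b.+1 - y C 2 * y C 4 = Y 0 0 0 b.+1 0 - Y 0 0 1 0 1.
    by rewrite /Y; ring.
  by apply: H; rewrite /img; congr (_, _); lia.
- have -> : y C 1 ^+ 2 - y C 0 * y C 2 = Y 0 2 0 0 0 - Y 1 0 1 0 0.
    by rewrite /Y; ring.
  by apply: H; rewrite /img; congr (_, _); lia.
- have -> : y C 2 * y C 3 ^+ b - y C 1 * y C 4 = Y 0 0 1 b 0 - Y 0 1 0 0 1.
    by rewrite /Y; ring.
  by apply: H; rewrite /img; congr (_, _); lia.
- have -> : y C 1 * y C 3 ^+ b - y C 0 * y C 4 = Y 0 1 0 b 0 - Y 1 0 0 0 1.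
    by rewrite /Y; ring.
  by apply: H; rewrite /img; congr (_, _); lia.
Qed.

Lemma ideal_ker f : I f -> varphi zl f = 0.
Proof.
move=> [cs ->]; rewrite varphiE rmorph_sum /=; apply: big1 => i _.
rewrite rmorphM /=; have := phi_gen i; rewrite varphiE => ->; by rewrite mulr0.
Qed.

Definition mk5 a0 a1 a2 a3 a4 : 'X_{1..5} :=
  [multinom (nth 0%N [:: a0; a1; a2; a3; a4] i) | i < 5].

Lemma mk5E a0 a1 a2 a3 a4 k : (k < 5)%N ->
  mk5 a0 a1 a2 a3 a4 (inord k) = nth 0%N [:: a0; a1; a2; a3; a4] k.
Proof. by move=> Hk; rewrite mnmE inordK. Qed.

Definition cm (m : 'X_{1..5}) k := m (inord k).

Lemma XY m : 'X_[m] = Y (cm m 0) (cm m 1) (cm m 2) (cm m 3) (cm m 4) :> {mpoly C[5]}.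
Proof. by rewrite mpolyXE_id prod5. Qed.

Lemma XY5 a0 a1 a2 a3 a4 : 'X_[mk5 a0 a1 a2 a3 a4] = Y a0 a1 a2 a3 a4 :> {mpoly C[5]}.
Proof. by rewrite XY /cm !mk5E. Qed.

Definition imgM m := img (cm m 0) (cm m 1) (cm m 2) (cm m 3) (cm m 4).
Definition Rs e := mk5 (s0 e) (s1 e) (s2 e) (s3 e) (s4 e).

Lemma K m : exists c0 c1 c2 c3 c4,
  [/\ imgM m = img c0 c1 c2 c3 c4, Rs (imgM m) = mk5 c0 c1 c2 c3 c4
    & I ('X_[m] - 'X_[mk5 c0 c1 c2 c3 c4])].
Proof.
have [c0 [c1 [c2 [c3 [c4 [Hn Hi HI]]]]]] := reduce (cm m 0) (cm m 1) (cm m 2) (cm m 3) (cm m 4).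
exists c0, c1, c2, c3, c4; split => //.
  have [E0 E1 E2 E3 E4] := std_normal c0 c4 Hn.
  by rewrite /Rs /imgM Hi E0 E1 E2 E3 E4.
by rewrite XY XY5.
Qed.

Lemma mk5_inj a0 a1 a2 a3 a4 c0 c1 c2 c3 c4 :
  mk5 a0 a1 a2 a3 a4 = mk5 c0 c1 c2 c3 c4 ->
  [/\ a0 = c0, a1 = c1, a2 = c2, a3 = c3 & a4 = c4].
Proof.
move=> E.
have F k : (k < 5)%N -> nth 0%N [:: a0; a1; a2; a3; a4] k = nth 0%N [:: c0; c1; c2; c3; c4] k.
  by move=> Hk; rewrite -!mk5E // E.
by split; [apply: (F 0%N) | apply: (F 1%N) | apply: (F 2%N) | apply: (F 3%N) | apply: (F 4%N)].
Qed.

Lemma Limg m : let e := imgM m in img (s0 e) (s1 e) (s2 e) (s3 e) (s4 e) = e.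
Proof.
have [c0 [c1 [c2 [c3 [c4 [Hi HR _]]]]]] := K m.
move=> e; have [-> -> -> -> ->] := mk5_inj HR.
by rewrite /e Hi.
Qed.

Lemma K2 m m' : Rs (imgM m) = Rs (imgM m') -> imgM m = imgM m'.
Proof.
move=> E; rewrite -(Limg m) -(Limg m').
by have [-> -> -> -> ->] := mk5_inj E.
Qed.

Lemma K1 m : I ('X_[m] - 'X_[Rs (imgM m)]).
Proof. by have [c0 [c1 [c2 [c3 [c4 [_ -> HI]]]]]] := K m. Qed.

Definition mono2 (e : nat * nat) : 'X_{1..2} := [multinom (nth 0%N [:: e.1; e.2] i) | i < 2].

Lemma monom_X e : monom C e = 'X_[mono2 e].
Proof.
rewrite mpolyXE_id !big_ord_recl big_ord0 mulr1 /monom !mnmE /=.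
by congr (_ ^+ _ * _ ^+ _); congr 'X__; apply/val_inj; rewrite /= inordK.
Qed.

Lemma mono2_inj e f : mono2 e = mono2 f -> e = f.
Proof.
move=> E; have E0 := congr1 (fun m : 'X_{1..2} => m (inord 0)) E.
have E1 := congr1 (fun m : 'X_{1..2} => m (inord 1)) E.
move: E0 E1; rewrite /= !mnmE !inordK //=.
by case: e f {E} => [? ?] [? ?] /= -> ->.
Qed.

Lemma phiE (f : {mpoly C[5]}) : varphi zl f = \sum_(m <- msupp f) f@_m *: 'X_[mono2 (imgM m)].
Proof.
rewrite varphiE /mmap; apply: eq_bigr => m _; rewrite mul_mpolyC; congr (_ *: _).
have -> : mmap1 hh m = mmap (@mpolyC 2 C) hh 'X_[m] by rewrite mmapX.
by rewrite -varphiE XY phiY monom_X.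
Qed.

Lemma coefS (T : eqType) k (s : seq T) (c : T -> C) (phi : T -> 'X_{1..k}) M :
  (\sum_(m <- s) c m *: 'X_[phi m] : {mpoly C[k]})@_M = \sum_(m <- s | phi m == M) c m.
Proof.
rewrite raddf_sum [RHS]big_mkcond /=; apply: eq_bigr => m _.
by rewrite mcoeffZ mcoeffX; case: eqP => _; rewrite ?mulr1 ?mulr0.
Qed.

Lemma ker_ideal f : varphi zl f = 0 -> I f.
Proof.
move=> H0.
set g := \sum_(m <- msupp f) f@_m *: 'X_[Rs (imgM m)].
have Hg : g = 0.
  apply/mpolyP => s; rewrite coefS mcoeff0.
  case: (boolP (has (fun m => Rs (imgM m) == s) (msupp f))) => [/hasP [m0 _ /eqP <-] | /hasPn Hn].
  - transitivity ((varphi zl f)@_(mono2 (imgM m0))); last by rewrite H0 mcoeff0.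
    rewrite phiE coefS; apply: eq_bigl => m.
    by apply/eqP/eqP => [/K2 -> // | /mono2_inj ->].
  - rewrite big_seq_cond big1 // => m /andP [Hm Hr].
    by move: (Hn m Hm); rewrite Hr.
suff : I (f - g) by rewrite Hg subr0.
rewrite /g {1}(mpolyE f) -sumrB.
apply: (big_ind I); [exact: I0 | exact: ID | ] => m _.
by rewrite -scalerBr; apply: IZ; apply: K1.
Qed.

Lemma ker_iff f : varphi zl f = 0 <-> I f.
Proof. by split; [apply: ker_ideal | apply: ideal_ker]. Qed.

End B.

Section A.
Variable b : nat.
Hypothesis b_gt0 : (0 < b)%N.
Local Notation p := (3 * b + 1)%N.
Local Notation zl := (zl b).

Lemma invE e : invariant_exp p b e = (p %| e.1 + b * e.2)%N.
Proof. by []. Qed.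

Lemma L_small c d : (0 < c + d)%N -> invariant_exp p b (c, d) -> (c + b * d < p)%N -> False.
Proof.
move=> Hpos; rewrite /invariant_exp /= => /eqP H Hlt.
move: H; rewrite modn_small // => H.
have Hd : (b * d = 0)%N by lia.
move: Hd => /eqP; rewrite muln_eq0 => /orP [/eqP|/eqP]; lia.
Qed.

Lemma L_z4 d : (0 < d < p)%N -> ~ (p %| b * d)%N.
Proof.
move=> /andP [H1 H2] Hdv.
have Hc : coprime p b.
  by rewrite /coprime gcdnC gcdnMDl gcdn1.
move: Hdv; rewrite Gauss_dvdr // => /(dvdn_leq H1); lia.
Qed.

Lemma L_eqp x : (p %| x)%N -> (0 < x)%N -> (x < 2 * p)%N -> x = p.
Proof.
move=> /dvdnP [k ->]; case: k => [|[|k]] /=; lia.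
Qed.

Lemma L_sub c d c' d' : invariant_exp p b (c, d) -> invariant_exp p b (c', d') ->
  (c' <= c)%N -> (d' <= d)%N -> invariant_exp p b (c - c', d - d')%N.
Proof.
rewrite !invE /= => H1 H2 Hc Hd.
have E : (c + b * d = (c - c' + b * (d - d')) + (c' + b * d'))%N.
  have H3 : (b * d' <= b * d)%N by rewrite leq_mul2l Hd orbT.
  rewrite mulnBr; lia.
by move: H1; rewrite E dvdn_addl.
Qed.

Lemma nc_pos c d : nc_invariant_exp p b (c, d) -> (0 < c + d)%N /\ invariant_exp p b (c, d).
Proof.
rewrite /nc_invariant_exp => /andP [H1 H2]; split => //.
by clear H2; move: H1; case: c => [|c]; case: d => [|d].
Qed.

Lemma nc_of c d : (0 < c + d)%N -> invariant_exp p b (c, d) -> nc_invariant_exp p b (c, d).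
Proof.
move=> H1 H2; rewrite /nc_invariant_exp H2 andbT.
by clear H2; move: H1; case: c => [|c]; case: d => [|d].
Qed.

Lemma zl_cases e : e \in zl ->
  e = (p, 0)%N \/ e = (2*b+1, 1)%N \/ e = (b+1, 2)%N \/ e = (1, 3)%N \/ e = (0, p)%N.
Proof.
by rewrite /zl !inE => /orP [/eqP ->|/orP [/eqP ->|/orP [/eqP ->|/orP [/eqP ->|/eqP ->]]]];
  [left|right;left|right;right;left|right;right;right;left|right;right;right;right].
Qed.

Lemma zl_inv e : e \in zl -> invariant_exp p b e.
Proof.
case/zl_cases => [->|[->|[->|[->|->]]]]; rewrite invE /=; apply/dvdnP.
- by exists 1%N; lia.
- by exists 1%N; lia.
- by exists 1%N; lia.
- by exists 1%N; lia.
- by exists b; lia.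
Qed.

Lemma zl_in_inv e : e \in zl -> in_inv p b e.
Proof.
move=> He; split.
  case: e He => c d He; apply: nc_of; last exact: zl_inv.
  by case/zl_cases: He => [[-> ->]|[[-> ->]|[[-> ->]|[[-> ->]|[-> ->]]]]]; lia.
move=> [[c1 d1] [[c2 d2] [/nc_pos [P1 I1] /nc_pos [P2 I2] /= E]]].
have S1 := L_small P1 I1; have S2 := L_small P2 I2.
case/zl_cases: He => [|[|[|[|]]]]; rewrite E => -[Ec Ed].
- have [Z1 Z2] : d1 = 0%N /\ d2 = 0%N by lia. subst d1 d2. move: S1 S2; lia.
- clear -Ec Ed S1 S2 P1 P2 b_gt0; move: Ed S1 S2 P1 P2; case: d1 => [|[|d1]]; case: d2 => [|[|d2]] //=; lia.
- clear -Ec Ed S1 S2 P1 P2 b_gt0; move: Ed S1 S2 P1 P2; case: d1 => [|[|[|d1]]]; case: d2 => [|[|[|d2]]] //=; lia.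
- clear -Ec Ed S1 S2 P1 P2 b_gt0; move: Ed S1 S2 P1 P2; case: d1 => [|[|[|[|d1]]]]; case: d2 => [|[|[|[|d2]]]] //=; lia.
- have [Z1 Z2] : c1 = 0%N /\ c2 = 0%N by lia.
  subst c1 c2.
  apply: (@L_z4 d1); first by lia.
  by move: I1; rewrite invE.
Qed.

Lemma in_inv_zl e : in_inv p b e -> e \in zl.
Proof.
case: e => c d [/nc_pos [P I] ND].
have dec : forall c1 d1 c2 d2, (c = c1 + c2)%N -> (d = d1 + d2)%N ->
   (0 < c1 + d1)%N -> invariant_exp p b (c1, d1) ->
   (0 < c2 + d2)%N -> invariant_exp p b (c2, d2) -> False.
  move=> c1 d1 c2 d2 Ec Ed P1 I1 P2 I2; apply: ND.
  exists (c1, d1), (c2, d2); split; try exact: nc_of.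
  by rewrite Ec Ed.
have Z : forall c' d', (c' <= c)%N -> (d' <= d)%N -> invariant_exp p b (c', d') ->
   (0 < c' + d')%N -> (c = c')%N /\ (d = d')%N.
  move=> c' d' Hc Hd I' P'.
  case: (leqP (c + d) (c' + d')) => H; first by lia.
  exfalso; apply: (dec c' d' (c - c') (d - d'))%N => //; try lia.
  exact: L_sub.
have Izl : forall e, e \in zl -> invariant_exp p b e by move=> e; apply: zl_inv.
case: (leqP p d) => Hd.
  have [-> ->] := Z 0%N p (leq0n _) Hd (Izl _ (mem_last _ _)) (ltac:(lia)).
  by rewrite /zl !inE eqxx !orbT.
case: (leqP p c) => Hc.
  have [-> ->] := Z p 0%N Hc (leq0n _) (Izl _ (mem_head _ _)) (ltac:(lia)).
  by rewrite /zl !inE eqxx.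
case: (leqP 1 c) => H1; case: (leqP 3 d) => H3.
- have [-> ->] := Z 1%N 3%N H1 H3 (Izl (1, 3)%N (ltac:(by rewrite /zl !inE eqxx !orbT))) (ltac:(lia)).
  by rewrite /zl !inE eqxx !orbT.
- clear ND dec Z; move: P I H3; case: d Hd => [|[|[|d]]] // Hd P I _.
  + exfalso; apply: (L_small P I); lia.
  + have E : (c + b * 1 = p)%N by apply: L_eqp; rewrite -?invE //; lia.
    have -> : c = (2 * b + 1)%N by lia.
    by rewrite /zl !inE eqxx !orbT.
  + have E : (c + b * 2 = p)%N by apply: L_eqp; rewrite -?invE //; lia.
    have -> : c = (b + 1)%N by lia.
    by rewrite /zl !inE eqxx !orbT.
- have -> : c = 0%N by lia.
  exfalso; apply: (@L_z4 d); first by lia.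
  by move: I; rewrite invE /= (_ : c = 0%N) //; lia.
- have -> : c = 0%N by lia.
  exfalso; apply: (@L_z4 d); first by lia.
  by move: I; rewrite invE /= (_ : c = 0%N) //; lia.
Qed.

Lemma lex_trans : transitive lex_gt.
Proof. move=> [y1 y2] [x1 x2] [z1 z2]; rewrite /lex_gt /=; lia. Qed.

Lemma lex_irr : irreflexive lex_gt.
Proof. move=> [x1 x2]; rewrite /lex_gt /=; lia. Qed.

Lemma zl_sorted : sorted lex_gt zl.
Proof. rewrite /= /lex_gt /=; lia. Qed.

Lemma zl_list : inv_list p b zl.
Proof.
split; first exact: zl_sorted.
by move=> e; split; [apply: zl_in_inv | apply: in_inv_zl].
Qed.

Lemma list_zl zs : inv_list p b zs -> zs = zl.
Proof.
move=> [Hs Hm]; apply: (irr_sorted_eq lex_trans lex_irr Hs zl_sorted) => e.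
apply/idP/idP => H.
- by apply: in_inv_zl; apply/Hm.
- by apply/Hm; apply: zl_in_inv.
Qed.

End A.

Lemma p_eq p b binv : (0 < b)%N -> (2 * b < p - 1)%N -> (0 < binv < p)%N ->
  ((p - b) * (p - binv) = 2 * p + 1)%N -> p = (3 * b + 1)%N.
Proof.
move=> H1 H2 /andP [H3 H4] E.
have [c Ec] : exists c, c = (p - binv)%N by eexists.
rewrite -Ec in E.
have Hc : (c < 4)%N by nia.
move: E; case: c Ec Hc => [|[|[|[|c]]]] Ec Hc E; nia.
Qed.

Unset Implicit Arguments.

Theorem proposition5p4 (R : realType) (p b binv : nat) :
  prime p ->
  (0 < b)%N -> (2 * b < p - 1)%N ->
  (0 < binv < p)%N -> (b * binv = 1 %[mod p])%N ->
  ((p - b) * (p - binv) = 2 * p + 1)%N ->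
  (exists zs, inv_list p b zs) /\
  (forall zs, inv_list p b zs ->
     size zs = 5%N /\
     (forall f : {mpoly (complex R)[5]},
        varphi zs f = 0 <-> in_ideal (kernel_gens (complex R) b) f)).
Proof.
move=> _ Hb H2 H3 _ E.
have Ep := p_eq Hb H2 H3 E; subst p.
split; first by exists (zl b); apply: zl_list.
move=> zs /(list_zl Hb) ->; split; first by [].
by move=> f; apply: ker_iff.
Qed.
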